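(* For every team $R$ of three robots, the Equivalent Oscillation problem $EqOsc$ is solvable by $R$ in the model $\mathcal{FCOM}$ under the fully synchronous scheduler with limited visibility, i.e. $EqOsc\in Task(\mathcal{FCOM}, FSYNCH, \mathcal{L.V.}; R)$.
   Context: Robots are anonymous, identical, autonomous points in the Euclidean plane. Each has its own local coordinate system, with no common chirality. Robots operate in Look-Compute-Move cycles: an instantaneous snapshot of visible robot positions and lights, a computation of a destination and light color, then a move. In $\mathcal{FCOM}$, each robot has a light with colors from a finite set, set at the end of Compute and visible only to other robots; a robot does not see its own light and is otherwise oblivious. Under the fully synchronous scheduler, all robots are activated in every round. Under limited visibility, a robot sees only robots (and their lights) within a fixed distance $V_r$ (same for all robots) of its current position, and the initial visibility graph (robots adjacent iff they see each other) is connected. Problem Equivalent Oscillation ($EqOsc$): three robots $r_1,r_2,r_3$ are initially at collinear points $B,A,C$ respectively, with $AB=AC=d$. Let $B',C'$ be the points on this line (on segments $AB$, $AC$) with $AB'=AC'=\frac{2d}{3}$. The robots $r_1$ and $r_3$ must always be equidistant from $r_2$ (which is at $A$). They must also oscillate: if at some round $t$, $r_1,r_3$ are at $B,C$, then at some round $t'>t$ they are at $B',C'$; and if at round $t'$ they are at $B',C'$, then at some round $t''>t'$ they are at $B,C$. *)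

(* Defs.v *)
From Stdlib Require Import Reals List Relations.
Open Scope R_scope.

Definition point : Type := (R * R)%type.

Definition edist (p q : point) : R :=
  sqrt ((fst p - fst q) ^ 2 + (snd p - snd q) ^ 2).

Definition collinear (p q r : point) : Prop :=
  (fst q - fst p) * (snd r - snd p) - (snd q - snd p) * (fst r - fst p) = 0.

Definition lerp (a b : point) (k : R) : point :=
  (fst a + k * (fst b - fst a), snd a + k * (snd b - snd a)).

(* the team: three anonymous robots; the names are only used by the
   specification, never given to the algorithm *)
Inductive robot : Type := r1 | r2 | r3.

(* A local coordinate system of a robot: unit of length (scale > 0),
   orientation (angle) and handedness (refl = true: opposite chirality).
   Its origin is the robot's current position. *)
Record frame : Type := Frame { fr_scale : R; fr_angle : R; fr_refl : bool }.
Definition valid_frame (f : frame) : Prop := 0 < fr_scale f.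

Definition to_local (f : frame) (o x : point) : point :=
  let vx := fst x - fst o in
  let vy := snd x - snd o in
  let c := cos (fr_angle f) in
  let s := sin (fr_angle f) in
  let wx := (c * vx + s * vy) / fr_scale f in
  let wy := (- s * vx + c * vy) / fr_scale f in
  if fr_refl f then (wx, - wy) else (wx, wy).

Definition to_global (f : frame) (o p : point) : point :=
  let u := if fr_refl f then (fst p, - snd p) else p in
  let c := cos (fr_angle f) in
  let s := sin (fr_angle f) in
  (fst o + fr_scale f * (c * fst u - s * snd u),
   snd o + fr_scale f * (s * fst u + c * snd u)).

(* A snapshot (Look phase): the set of (local position, light colour) of the
   other robots within visibility range.  The robot's own light is not seen;
   robots are anonymous (a set, no identities). *)
Definition snapshot (Col : Type) : Type := point * Col -> Prop.

(* An FCOM algorithm (Compute phase): destination in local coordinates and new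
   colour of the robot's light; otherwise oblivious. *)
Definition algorithm (Col : Type) : Type := snapshot Col -> point * Col.

Definition config (Col : Type) : Type := ((robot -> point) * (robot -> Col))%type.

Definition snap {Col : Type} (Vr : R) (fr : robot -> frame) (cf : config Col)
  (i : robot) : snapshot Col :=
  fun pc => exists j, j <> i /\ edist (fst cf i) (fst cf j) <= Vr /\
     fst pc = to_local (fr i) (fst cf i) (fst cf j) /\ snd pc = snd cf j.

(* one fully synchronous round: every robot is activated, moves rigidly to its
   destination, and sets its light *)
Definition step {Col : Type} (alg : algorithm Col) (Vr : R)
  (fr : robot -> frame) (cf : config Col) : config Col :=
  (fun i => to_global (fr i) (fst cf i) (fst (alg (snap Vr fr cf i))),
   fun i => snd (alg (snap Vr fr cf i))).

Fixpoint exec {Col : Type} (alg : algorithm Col) (Vr : R) (fr : robot -> frame)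
  (init : config Col) (t : nat) : config Col :=
  match t with
  | O => init
  | S t' => step alg Vr fr (exec alg Vr fr init t')
  end.

Definition visible (Vr : R) (pos : robot -> point) (i j : robot) : Prop :=
  i <> j /\ edist (pos i) (pos j) <= Vr.

Definition vis_connected (Vr : R) (pos : robot -> point) : Prop :=
  forall i j, clos_refl_trans robot (visible Vr pos) i j.

(* the EqOsc specification for the run pos, started with r1,r2,r3 at Bp,Ap,Cp *)
Definition eqosc_ok (Ap Bp Cp : point) (pos : nat -> robot -> point) : Prop :=
  let Bp' := lerp Ap Bp (2 / 3) in
  let Cp' := lerp Ap Cp (2 / 3) in
  (forall t, pos t r2 = Ap /\ edist (pos t r1) (pos t r2) = edist (pos t r3) (pos t r2)) /\
  (forall t, pos t r1 = Bp /\ pos t r3 = Cp ->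
     exists t', (t < t')%nat /\ pos t' r1 = Bp' /\ pos t' r3 = Cp') /\
  (forall t, pos t r1 = Bp' /\ pos t r3 = Cp' ->
     exists t', (t < t')%nat /\ pos t' r1 = Bp /\ pos t' r3 = Cp).

(* Main.v *)
Require Import Defs.
From Stdlib Require Import Reals List Relations Lra ClassicalEpsilon Arith Lia.
Open Scope R_scope.

Definition scl (k : R) (p : point) : point := (k * fst p, k * snd p).

Lemma to_global_scl f X A k : valid_frame f ->
  to_global f X (scl k (to_local f X A)) =
  (fst X + k * (fst A - fst X), snd X + k * (snd A - snd X)).
Proof.
  destruct f as [sc an rf]; unfold valid_frame; simpl; intro Hs.
  destruct X as [x1 x2], A as [a1 a2].
  unfold to_global, to_local, scl; simpl.
  pose proof (sin2_cos2 an) as H; unfold Rsqr in H.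
  set (c := cos an) in *; set (s := sin an) in *.
  destruct rf; simpl; f_equal.
  - transitivity (x1 + k*(a1-x1)*(s*s+c*c)); [field; lra | rewrite H; ring].
  - transitivity (x2 + k*(a2-x2)*(s*s+c*c)); [field; lra | rewrite H; ring].
  - transitivity (x1 + k*(a1-x1)*(s*s+c*c)); [field; lra | rewrite H; ring].
  - transitivity (x2 + k*(a2-x2)*(s*s+c*c)); [field; lra | rewrite H; ring].
Qed.

Lemma to_local_2 f X A Y : valid_frame f ->
  fst Y = 2 * fst A - fst X -> snd Y = 2 * snd A - snd X ->
  to_local f X Y = scl 2 (to_local f X A).
Proof.
  destruct f as [sc an rf]; unfold valid_frame; simpl; intro Hs.
  destruct X as [x1 x2], A as [a1 a2], Y as [y1 y2]; simpl; intros -> ->.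
  unfold to_local, scl; simpl.
  destruct rf; simpl; f_equal; field; lra.
Qed.

Lemma to_local_m1 f X A Y : valid_frame f ->
  fst Y = 2 * fst X - fst A -> snd Y = 2 * snd X - snd A ->
  to_local f X Y = scl (-1) (to_local f X A).
Proof.
  destruct f as [sc an rf]; unfold valid_frame; simpl; intro Hs.
  destruct X as [x1 x2], A as [a1 a2], Y as [y1 y2]; simpl; intros -> ->.
  unfold to_local, scl; simpl.
  destruct rf; simpl; f_equal; field; lra.
Qed.

Lemma to_local_nz f X A : valid_frame f -> X <> A -> to_local f X A <> (0,0).
Proof.
  intros Hf HXA E.
  pose proof (to_global_scl f X A 1 Hf) as G.
  rewrite E in G. unfold scl, to_global in G. simpl in G.
  destruct X as [x1 x2], A as [a1 a2]; simpl in G.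
  apply HXA. destruct (fr_refl f); simpl in G; injection G; intros; f_equal; nra.
Qed.

Lemma sq0 x : x ^ 2 = 0 -> x = 0.
Proof. intro H. replace (x^2) with (x*x) in H by ring.
  destruct (Rmult_integral _ _ H); auto. Qed.

Lemma uniq_C (a1 a2 b1 b2 c1 c2 : R) :
  (b1 - a1)^2 + (b2 - a2)^2 = (c1 - a1)^2 + (c2 - a2)^2 ->
  (a1 - b1) * (c2 - b2) - (a2 - b2) * (c1 - b1) = 0 ->
  (b1, b2) <> (c1, c2) -> c1 = 2*a1 - b1 /\ c2 = 2*a2 - b2.
Proof.
  intros H1 H2 H3.
  set (u1 := b1 - a1) in *. set (u2 := b2 - a2) in *.
  set (v1 := c1 - a1) in *. set (v2 := c2 - a2) in *.
  assert (E : ((v1-u1)^2 + (v2-u2)^2) * ((v1+u1)^2 + (v2+u2)^2) = 0).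
  { assert (D : (v1-u1)*(v1+u1) + (v2-u2)*(v2+u2) = 0).
    { replace ((v1-u1)*(v1+u1) + (v2-u2)*(v2+u2)) with ((v1^2+v2^2) - (u1^2+u2^2)) by ring. lra. }
    assert (Cr : (v1-u1)*(v2+u2) - (v2-u2)*(v1+u1) = 0).
    { replace ((v1-u1)*(v2+u2) - (v2-u2)*(v1+u1)) with (2*((a1 - b1) * (c2 - b2) - (a2 - b2) * (c1 - b1))) by (unfold u1,u2,v1,v2; ring). lra. }
    transitivity (((v1-u1)*(v1+u1) + (v2-u2)*(v2+u2))^2 + ((v1-u1)*(v2+u2) - (v2-u2)*(v1+u1))^2); [ring|].
    rewrite D, Cr; ring. }
  apply Rmult_integral in E; destruct E as [E|E].
  - exfalso; apply H3. pose proof (pow2_ge_0 (v1-u1)). pose proof (pow2_ge_0 (v2-u2)).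
    assert (v1 - u1 = 0) by (apply sq0; lra). assert (v2 - u2 = 0) by (apply sq0; lra).
    unfold u1,u2,v1,v2 in *. f_equal; lra.
  - pose proof (pow2_ge_0 (v1+u1)). pose proof (pow2_ge_0 (v2+u2)).
    assert (v1 + u1 = 0) by (apply sq0; lra). assert (v2 + u2 = 0) by (apply sq0; lra).
    unfold u1,u2,v1,v2 in *. split; lra.
Qed.

Definition endp (S : snapshot bool) (q : point) : Prop :=
  q <> (0,0) /\ (exists c, S (q, c)) /\ forall p c, S (p, c) -> p = q \/ p = scl 2 q.

Definition kb (b : bool) : R := if b then 1/3 else -1/2.

Definition alg : algorithm bool := fun S =>
  let c := if excluded_middle_informative (exists p, S (p, true)) then true else false in
  match excluded_middle_informative (exists q, endp S q) with
  | left H => (scl (kb c) (proj1_sig (constructive_indefinite_description _ H)), negb c)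
  | right _ => ((0,0), negb c)
  end.

Lemma col_ok (S : snapshot bool) b q0 :
  S (q0, b) -> (forall p c, S (p, c) -> c = b) ->
  (if excluded_middle_informative (exists p, S (p, true)) then true else false) = b.
Proof.
  intros H1 H2. destruct excluded_middle_informative as [[p Hp]|Hn].
  - exact (H2 _ _ Hp).
  - destruct b; auto. exfalso; apply Hn; eauto.
Qed.

Lemma alg_end (S : snapshot bool) q0 b :
  q0 <> (0,0) -> S (q0, b) ->
  (forall p c, S (p, c) -> c = b /\ (p = q0 \/ p = scl 2 q0)) ->
  alg S = (scl (kb b) q0, negb b).
Proof.
  intros Hnz H1 H2. unfold alg.
  rewrite (col_ok S b q0 H1 (fun p c h => proj1 (H2 p c h))).
  destruct excluded_middle_informative as [H|Hn].
  - destruct constructive_indefinite_description as [q [Hq [[c Hc] Hall]]]. simpl.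
    f_equal. f_equal.
    destruct (proj2 (H2 _ _ Hc)) as [E|E]; [auto|].
    exfalso. destruct (Hall _ _ H1) as [E'|E']; subst;
    destruct q0 as [x y]; unfold scl in *; simpl in *; injection E'; intros; apply Hnz; f_equal; lra.
  - exfalso; apply Hn. exists q0. split; [auto|split; [eauto|]].
    intros p c h; exact (proj2 (H2 p c h)).
Qed.

Lemma alg_mid (S : snapshot bool) P b :
  P <> (0,0) -> S (P, b) -> S (scl (-1) P, b) ->
  (forall p c, S (p, c) -> c = b /\ (p = P \/ p = scl (-1) P)) ->
  alg S = ((0,0), negb b).
Proof.
  intros Hnz H1 H1' H2. unfold alg.
  rewrite (col_ok S b P H1 (fun p c h => proj1 (H2 p c h))).
  destruct excluded_middle_informative as [H|Hn]; auto.
  exfalso. destruct H as [q [Hq [_ Hall]]].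
  destruct P as [x y], q as [u v]; unfold scl in *; simpl in *.
  destruct (Hall _ _ H1) as [E|E]; destruct (Hall _ _ H1') as [E'|E'];
  injection E; injection E'; intros;
  first [apply Hnz; f_equal; lra | apply Hq; f_equal; lra].
Qed.

Definition sb (b : bool) : R := if b then 1 else 2/3.

Lemma edist_le P Q X Y :
  (fst P - fst Q)^2 + (snd P - snd Q)^2 <= (fst X - fst Y)^2 + (snd X - snd Y)^2 ->
  edist P Q <= edist X Y.
Proof. intro H; unfold edist; apply sqrt_le_1_alt; exact H. Qed.

Lemma aux s r : 0 < s <= 1 -> 0 <= r -> s^2 * r <= r.
Proof. intros. assert (s^2 <= 1) by nra. nra. Qed.

Lemma sb_range b : 0 < sb b <= 1.
Proof. destruct b; simpl; lra. Qed.

Lemma step_ok Vr fr (cf : config bool) A B C b :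
  (forall i, valid_frame (fr i)) -> A <> B ->
  fst C = 2 * fst A - fst B -> snd C = 2 * snd A - snd B ->
  edist A B <= Vr ->
  fst cf r1 = lerp A B (sb b) -> fst cf r2 = A -> fst cf r3 = lerp A C (sb b) ->
  (forall i, snd cf i = b) ->
  fst (step alg Vr fr cf) r1 = lerp A B (sb (negb b)) /\
  fst (step alg Vr fr cf) r2 = A /\
  fst (step alg Vr fr cf) r3 = lerp A C (sb (negb b)) /\
  forall i, snd (step alg Vr fr cf) i = negb b.
Proof.
  intros Hf HAB HC1 HC2 HV E1 E2 E3 El.
  destruct A as [a1 a2], B as [b1 b2], C as [c1 c2]; simpl in HC1, HC2; subst c1 c2.
  pose proof (sb_range b) as [Hs0 Hs1].
  set (s := sb b) in *.
  assert (Hne : forall k, 0 < k -> lerp (a1,a2) (b1,b2) k <> (a1,a2)).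
  { intros k hk h; unfold lerp in h; simpl in h; injection h; intros.
    apply HAB; f_equal; nra. }
  assert (Hne' : forall k, 0 < k -> lerp (a1,a2) (2*a1-b1,2*a2-b2) k <> (a1,a2)).
  { intros k hk h; unfold lerp in h; simpl in h; injection h; intros.
    apply HAB; f_equal; nra. }
  assert (D1 : edist (lerp (a1,a2) (b1,b2) s) (a1,a2) <= Vr).
  { eapply Rle_trans; [|exact HV]. apply edist_le; simpl; match goal with |- ?l <= ?r => replace l with (s^2 * r) by ring end; apply aux; auto; pose proof (Rle_0_sqr (a1-b1)); pose proof (Rle_0_sqr (a2-b2)); unfold Rsqr in *; lra. }
  assert (D2 : edist (lerp (a1,a2) (2*a1-b1,2*a2-b2) s) (a1,a2) <= Vr).
  { eapply Rle_trans; [|exact HV]. apply edist_le; simpl; match goal with |- ?l <= ?r => replace l with (s^2 * r) by ring end; apply aux; auto; pose proof (Rle_0_sqr (a1-b1)); pose proof (Rle_0_sqr (a2-b2)); unfold Rsqr in *; lra. }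
  assert (D1' : edist (a1,a2) (lerp (a1,a2) (b1,b2) s) <= Vr).
  { eapply Rle_trans; [|exact HV]. apply edist_le; simpl; match goal with |- ?l <= ?r => replace l with (s^2 * r) by ring end; apply aux; auto; pose proof (Rle_0_sqr (a1-b1)); pose proof (Rle_0_sqr (a2-b2)); unfold Rsqr in *; lra. }
  assert (D2' : edist (a1,a2) (lerp (a1,a2) (2*a1-b1,2*a2-b2) s) <= Vr).
  { eapply Rle_trans; [|exact HV]. apply edist_le; simpl; match goal with |- ?l <= ?r => replace l with (s^2 * r) by ring end; apply aux; auto; pose proof (Rle_0_sqr (a1-b1)); pose proof (Rle_0_sqr (a2-b2)); unfold Rsqr in *; lra. }
  assert (A1 : alg (snap Vr fr cf r1) =
     (scl (kb b) (to_local (fr r1) (lerp (a1,a2) (b1,b2) s) (a1,a2)), negb b)).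
  { apply alg_end.
    - apply to_local_nz; auto.
    - exists r2; rewrite E1, E2; repeat split; try discriminate; auto.
    - intros p c [j [Hj [Hd [Hp Hc]]]]; simpl in Hp, Hc; rewrite El in Hc; split; auto.
      rewrite E1 in Hp. destruct j; [congruence| left; rewrite Hp, E2; auto | right].
      rewrite Hp, E3. apply to_local_2; auto; unfold lerp; simpl; ring. }
  assert (A3 : alg (snap Vr fr cf r3) =
     (scl (kb b) (to_local (fr r3) (lerp (a1,a2) (2*a1-b1,2*a2-b2) s) (a1,a2)), negb b)).
  { apply alg_end.
    - apply to_local_nz; auto.
    - exists r2; rewrite E3, E2; repeat split; try discriminate; auto.
    - intros p c [j [Hj [Hd [Hp Hc]]]]; simpl in Hp, Hc; rewrite El in Hc; split; auto.
      rewrite E3 in Hp. destruct j; [right| left; rewrite Hp, E2; auto | congruence].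
      rewrite Hp, E1. apply to_local_2; auto; unfold lerp; simpl; ring. }
  assert (A2 : alg (snap Vr fr cf r2) = ((0,0), negb b)).
  { apply (alg_mid _ (to_local (fr r2) (a1,a2) (lerp (a1,a2) (b1,b2) s))).
    - apply to_local_nz; auto. intro h; apply (Hne s); auto.
    - exists r1; rewrite E1, E2; repeat split; try discriminate; auto.
    - exists r3; rewrite E3, E2; repeat split; try discriminate; auto.
      simpl; symmetry; apply to_local_m1; auto; unfold lerp; simpl; ring.
    - intros p c [j [Hj [Hd [Hp Hc]]]]; simpl in Hp, Hc; rewrite El in Hc; split; auto.
      rewrite E2 in Hp. destruct j; [left; rewrite Hp, E1; auto | congruence | right].
      rewrite Hp, E3. apply to_local_m1; auto; unfold lerp; simpl; ring. }
  unfold step; simpl. rewrite A1, A2, A3; simpl. rewrite E1, E2, E3.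
  rewrite !to_global_scl by auto.
  split; [|split; [|split]].
  - unfold lerp, s, sb, kb; destruct b; simpl; f_equal; field.
  - unfold to_global; simpl; destruct (fr_refl (fr r2)); simpl; f_equal; ring.
  - unfold lerp, s, sb, kb; destruct b; simpl; f_equal; field.
  - intro i; destruct i; simpl; [rewrite A1|rewrite A2|rewrite A3]; reflexivity.
Qed.

Theorem lemma5 :
  exists (Col : Type) (colors : list Col), (forall c : Col, In c colors) /\
  exists (c0 : Col) (alg : algorithm Col),
  forall (Vr d : R) (Ap Bp Cp : point) (fr : robot -> frame),
    0 < d -> Bp <> Cp -> collinear Bp Ap Cp ->
    edist Ap Bp = d -> edist Ap Cp = d ->
    (forall i, valid_frame (fr i)) ->
    let init : config Col :=
      (fun i => match i with r1 => Bp | r2 => Ap | r3 => Cp end, fun _ => c0) in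
    vis_connected Vr (fst init) ->
    eqosc_ok Ap Bp Cp (fun t => fst (exec alg Vr fr init t)).
Proof.
  exists bool, (true :: false :: nil). split; [intros []; simpl; auto|].
  exists true, alg.
  intros Vr d A B C fr Hd HBC Hcol HAB HAC Hf init Hconn.
  destruct A as [a1 a2], B as [b1 b2], C as [c1 c2].
  assert (Hsq : (b1-a1)^2 + (b2-a2)^2 = (c1-a1)^2 + (c2-a2)^2).
  { unfold edist in HAB, HAC; simpl in HAB, HAC.
    rewrite <- HAC in HAB. apply sqrt_inj in HAB;
    [| pose proof (Rle_0_sqr (a1-b1)); pose proof (Rle_0_sqr (a2-b2)); unfold Rsqr in *; simpl; lra
     | pose proof (Rle_0_sqr (a1-c1)); pose proof (Rle_0_sqr (a2-c2)); unfold Rsqr in *; simpl; lra].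
    replace ((b1-a1)^2) with ((a1-b1)^2) by ring. replace ((b2-a2)^2) with ((a2-b2)^2) by ring.
    replace ((c1-a1)^2) with ((a1-c1)^2) by ring. replace ((c2-a2)^2) with ((a2-c2)^2) by ring.
    exact HAB. }
  destruct (uniq_C a1 a2 b1 b2 c1 c2 Hsq Hcol HBC) as [HC1 HC2].
  assert (HAB' : (a1,a2) <> (b1,b2)).
  { intro E; injection E; intros Ea Eb. rewrite <- Ea, <- Eb in HAB. unfold edist in HAB; cbn [fst snd] in HAB.
    replace ((a1-a1)^2 + (a2-a2)^2) with 0 in HAB by ring. rewrite sqrt_0 in HAB; lra. }
  assert (HV : edist (a1,a2) (b1,b2) <= Vr).
  { pose proof (Hconn r1 r2) as H. apply clos_rt_rt1n in H.
    inversion H; subst.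
    match goal with Hxy : visible _ _ r1 ?y |- _ => destruct Hxy as [Hne Hd'] end. destruct y; simpl in Hd'.
    - congruence.
    - eapply Rle_trans; [|exact Hd']. apply edist_le; simpl; lra.
    - eapply Rle_trans; [|exact Hd']. apply edist_le; simpl.
      pose proof (Rle_0_sqr (a1-b1)); pose proof (Rle_0_sqr (a2-b2)); unfold Rsqr in *. nra. }
  assert (Inv : forall t,
    fst (exec alg Vr fr init t) r1 = lerp (a1,a2) (b1,b2) (sb (Nat.even t)) /\
    fst (exec alg Vr fr init t) r2 = (a1,a2) /\
    fst (exec alg Vr fr init t) r3 = lerp (a1,a2) (c1,c2) (sb (Nat.even t)) /\
    forall i, snd (exec alg Vr fr init t) i = Nat.even t).
  { induction t as [|t IH].
    - simpl. unfold lerp; simpl. repeat split; try (f_equal; ring).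
    - destruct IH as [E1 [E2 [E3 El]]]. simpl exec.
      rewrite Nat.even_succ, <- Nat.negb_even.
      apply (step_ok Vr fr _ (a1,a2) (b1,b2) (c1,c2)); auto. }
  unfold eqosc_ok. simpl.
  split; [|split].
  - intro t. destruct (Inv t) as [E1 [E2 [E3 _]]]. rewrite E1, E2, E3. split; auto.
    unfold edist, lerp; simpl. f_equal. rewrite HC1, HC2. ring.
  - intros t [F1 F3]. exists (S t). split; [lia|].
    destruct (Inv t) as [E1 _]. destruct (Inv (S t)) as [G1 [_ [G3 _]]].
    rewrite G1, G3, Nat.even_succ, <- Nat.negb_even.
    destruct (Nat.even t) eqn:Ev; [split; reflexivity|].
    exfalso. rewrite E1 in F1. unfold lerp, sb in F1; simpl in F1. injection F1; intros.
    apply HAB'; f_equal; lra.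
  - intros t [F1 F3]. exists (S t). split; [lia|].
    destruct (Inv t) as [E1 _]. destruct (Inv (S t)) as [G1 [_ [G3 _]]].
    rewrite G1, G3, Nat.even_succ, <- Nat.negb_even.
    destruct (Nat.even t) eqn:Ev.
    + exfalso. rewrite E1 in F1. unfold lerp, sb in F1; simpl in F1. injection F1; intros.
      apply HAB'; f_equal; lra.
    + unfold lerp, sb; simpl; split; f_equal; ring.
Qed.
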